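(* Let $G$ be a group, $X$ a right $G$-set and $A$ a $G$-graded $k$-algebra, and let $\mathcal G=kX\otimes-:\mathcal M_A\to\mathrm{gr}\text{-}(G,X,A)$. (1) If $X$ contains a nonempty finite $G$-subset $X'$ whose cardinality $\#X'$ is invertible in $k$, then $\mathcal G$ is separable. (2) If $A\neq 0$ is strongly graded and $\mathcal G$ is separable, then $X$ contains a nonempty finite $G$-subset.
   Context: $A=\bigoplus_{g\in G}A_g$ with $A_gA_h\subseteq A_{gh}$ and $1\in A_1$; strongly graded means $A_gA_h=A_{gh}$ for all $g,h$. $\mathrm{gr}\text{-}(G,X,A)$ is the category of right $A$-modules $M=\bigoplus_{x\in X}M_x$ with $M_xA_g\subseteq M_{x\cdot g}$, morphisms graded $A$-linear maps. $\mathcal G(N)=kX\otimes N$ with grading $(kX\otimes N)_x=x\otimes N$ and action $(x\otimes n)a_g=x\cdot g\otimes na_g$ for $a_g\in A_g$; it is right adjoint to the forgetful functor. A $G$-subset of $X$ is a subset $X'$ with $x'\cdot g\in X'$ for all $x'\in X'$, $g\in G$. A functor is separable if $\mathrm{Hom}(M,N)\to\mathrm{Hom}(\mathcal GM,\mathcal GN)$ has a left inverse natural in $M,N$. *)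

(* Defs.v *)
From Stdlib Require Import List.
From HB Require Import structures.
From mathcomp Require Import all_boot all_order all_algebra.
From mathcomp Require Import monoid.

Set Implicit Arguments.
Unset Strict Implicit.
Unset Printing Implicit Defensive.

Import GRing.Theory.
Local Open Scope ring_scope.

Definition is_right_action (G : groupType) (X : Type) (act : X -> G -> X) :=
  (forall x, act x 1%g = x) /\
  (forall x g h, act (act x g) h = act x (g * h)%g).

Definition is_Gsubset (G : groupType) (X : Type) (act : X -> G -> X)
  (S : X -> Prop) := forall x g, S x -> S (act x g).

(* s is a duplicate-free enumeration of S (so S is finite, #S = length s). *)
Definition enumerates (X : Type) (S : X -> Prop) (s : list X) :=
  NoDup s /\ forall x, S x <-> In x s.

Definition invertible (k : comPzRingType) (x : k) := exists u : k, u * x = 1.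

(* A k-algebra: a ring A with a ring morphism iota : k -> A whose image
   is central (A = 0 is allowed). *)
Definition central_image (k : comPzRingType) (A : pzRingType)
  (iota : {rmorphism k -> A}) := forall (c : k) (a : A), iota c * a = a * iota c.

(* A G-grading A = (+)_{g in G} A_g of the k-algebra A; deg g is A_g. *)
Record is_grading (k : comPzRingType) (G : groupType) (A : pzRingType)
    (iota : {rmorphism k -> A}) (deg : G -> A -> Prop) : Prop := {
  grading0 : forall g, deg g 0;
  gradingD : forall g a b, deg g a -> deg g b -> deg g (a + b);
  gradingZ : forall g c a, deg g a -> deg g (iota c * a);
  grading_span : forall a : A, exists (s : seq G) (f : G -> A),
      (forall g, deg g (f g)) /\ a = \sum_(g <- s) f g;
  grading_direct : forall (s : seq G) (f : G -> A),
      uniq s -> (forall g, deg g (f g)) -> \sum_(g <- s) f g = 0 ->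
      forall g, g \in s -> f g = 0;
  gradingM : forall g h a b, deg g a -> deg h b -> deg (g * h)%g (a * b);
  grading1 : deg 1%g 1
}.

(* Strongly graded: A_g A_h = A_{gh}, i.e. every element of A_{gh} is a
   finite sum of products a_g b_h (the inclusion ⊆ is part of is_grading). *)
Definition strongly_graded (G : groupType) (A : pzRingType)
  (deg : G -> A -> Prop) :=
  forall g h (c : A), deg (g * h)%g c ->
    exists s : seq (A * A),
      (forall p, p \in s -> deg g p.1 /\ deg h p.2) /\
      c = \sum_(p <- s) p.1 * p.2.

Record rmod (A : pzRingType) := RMod {
  rmod_sort :> zmodType;
  ract : rmod_sort -> A -> rmod_sort;
  ractDl : forall a m m', ract (m + m') a = ract m a + ract m' a;
  ractDr : forall m a b, ract m (a + b) = ract m a + ract m b;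
  ract1 : forall m, ract m 1 = m;
  ractA : forall m a b, ract (ract m a) b = ract m (a * b)
}.

Definition is_Ahom (A : pzRingType) (M N : rmod A) (f : M -> N) :=
  (forall m m', f (m + m') = f m + f m') /\
  (forall m a, f (ract m a) = ract (f m) a).

(* As a k-module, kX (x) N = (+)_{x in X} x (x) N, with (kX (x) N)_x = x (x) N
   and (x (x) n) a_g = x.g (x) n a_g.  A graded A-linear map
   kX (x) M -> kX (x) N maps each x (x) M into x (x) N, hence is the same
   thing as a family (phi_x)_{x in X} of additive maps M -> N (phi_x being the
   restriction to the component x (x) M ≅ M), and A-linearity is exactly
   phi_{x.g}(m a_g) = phi_x(m) a_g for homogeneous a_g in A_g.
   [grhom] describes Hom_{gr-(G,X,A)}(G M, G N) in these terms. *)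
Definition grhom (G : groupType) (X : Type) (act : X -> G -> X)
  (A : pzRingType) (deg : G -> A -> Prop) (M N : rmod A) (phi : X -> M -> N) :=
  (forall x m m', phi x (m + m') = phi x m + phi x m') /\
  (forall x g a m, deg g a -> phi (act x g) (ract m a) = ract (phi x m) a).

(* G on morphisms: G f = id_{kX} (x) f, i.e. the family (f)_{x in X}. *)
Definition Gmap (X : Type) (A : pzRingType) (M N : rmod A) (f : M -> N)
  : X -> M -> N := fun _ => f.

Definition separable_G (G : groupType) (X : Type) (act : X -> G -> X)
  (A : pzRingType) (deg : G -> A -> Prop) :=
  exists P : forall M N : rmod A, (X -> M -> N) -> M -> N,
    (forall (M N : rmod A) (phi : X -> M -> N),
        grhom act deg phi -> is_Ahom (P M N phi)) /\
    (forall (M N : rmod A) (f : M -> N),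
        is_Ahom f -> forall m, P M N (@Gmap X A M N f) m = f m) /\
    (forall (M M' N N' : rmod A) (f : M' -> M) (h : N -> N') (phi : X -> M -> N),
        is_Ahom f -> is_Ahom h -> grhom act deg phi ->
        forall m, P M' N' (fun x => h \o phi x \o f) m = h (P M N phi (f m))).

(* Main.v *)
Require Import Defs.
From Stdlib Require Import List.
From HB Require Import structures.
From mathcomp Require Import all_boot all_order all_algebra.
From mathcomp Require Import monoid.
From mathcomp Require boolp.
Local Open Scope ring_scope.
Import GRing.Theory.
Set Implicit Arguments.
Unset Strict Implicit.


Lemma In_mem (T : eqType) (x : T) (s : seq T) : List.In x s <-> x \in s.
Proof.
elim: s => [|y s IH] //=; rewrite inE; split.
- by case=> [->|/IH ->]; rewrite ?eqxx ?orbT.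
- by case/orP=> [/eqP ->|/IH]; [left|right].
Qed.

Lemma memIn (T : eqType) (x : T) (s : seq T) : x \in s -> List.In x s.
Proof. by move/In_mem. Qed.
Lemma Inmem (T : eqType) (x : T) (s : seq T) : List.In x s -> x \in s.
Proof. by move/In_mem. Qed.

Lemma NoDup_uniq (T : eqType) (s : seq T) : NoDup s -> uniq s.
Proof.
elim: s => [|y s IH] //= H; inversion H; subst.
by rewrite IH // andbT; apply/negP => /In_mem.
Qed.

Lemma uniq_NoDup (T : eqType) (s : seq T) : uniq s -> NoDup s.
Proof.
elim: s => [|y s IH] /=; first by constructor.
by case/andP=> Hy Hs; constructor; [move/In_mem; apply/negP|apply IH].
Qed.

Definition XT (X : Type) : Type := X.
HB.instance Definition _ (X : Type) := boolp.gen_eqMixin (XT X).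
HB.instance Definition _ (X : Type) := boolp.gen_choiceMixin (XT X).

Section RmodLemmas.
Variables (A : pzRingType) (M : rmod A).

Lemma ract0l (a : A) : ract (0 : M) a = 0.
Proof.
have := ractDl a (0 : M) 0; rewrite addr0 => /(congr1 (fun z => z - ract (0:M) a)).
by rewrite subrr addrK.
Qed.

Lemma ract0r (m : M) : ract m 0 = 0.
Proof.
have := ractDr m 0 0; rewrite addr0 => /(congr1 (fun z => z - ract m 0)).
by rewrite subrr addrK.
Qed.

Lemma ract_suml (I : Type) (r : seq I) (F : I -> M) a :
  ract (\sum_(i <- r) F i) a = \sum_(i <- r) ract (F i) a.
Proof.
elim: r => [|i r IH]; first by rewrite !big_nil ract0l.
by rewrite !big_cons ractDl IH.
Qed.

Lemma ract_sumr (I : Type) (r : seq I) (F : I -> A) (m : M) :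
  ract m (\sum_(i <- r) F i) = \sum_(i <- r) ract m (F i).
Proof.
elim: r => [|i r IH]; first by rewrite !big_nil ract0r.
by rewrite !big_cons ractDr IH.
Qed.

Lemma ract_nat (m : M) n : ract m n%:R = m *+ n.
Proof.
elim: n => [|n IH]; first by rewrite ract0r.
by rewrite [in LHS]mulrS ractDr ract1 IH -mulrS.
Qed.
End RmodLemmas.

Lemma add_hom0 (U V : zmodType) (f : U -> V) :
  (forall m m', f (m + m') = f m + f m') -> f 0 = 0.
Proof.
move=> H; have := H 0 0; rewrite addr0 => /(congr1 (fun z => z - f 0)).
by rewrite subrr addrK.
Qed.

Lemma add_hom_sum (U V : zmodType) (f : U -> V) (I : Type) (r : seq I) F :
  (forall m m', f (m + m') = f m + f m') ->
  f (\sum_(i <- r) F i) = \sum_(i <- r) f (F i).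
Proof.
move=> H; elim: r => [|i r IH]; first by rewrite !big_nil (add_hom0 H).
by rewrite !big_cons H IH.
Qed.

Lemma sum_const_len (V : zmodType) (T : Type) (s : list T) (c : V) :
  \sum_(x <- s) c = c *+ length s.
Proof.
elim: s => [|x s IH]; first by rewrite big_nil.
by rewrite big_cons IH /= mulrS.
Qed.

Section Part1.
Variables (k : comPzRingType) (G : groupType) (X : Type)
  (act : X -> G -> X) (A : pzRingType) (iota : {rmorphism k -> A})
  (deg : G -> A -> Prop).
Hypotheses (hact : is_right_action act) (hcen : central_image iota)
  (hgr : is_grading iota deg).
Local Notation XT := (XT X).

Lemma part1 : (exists (X' : X -> Prop) (s : list X),
       is_Gsubset act X' /\ enumerates X' s /\ s <> nil /\
       invertible ((length s)%:R : k)) ->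
     separable_G act deg.
Proof.
case=> X' [s [HG [[Hnd Hen] [_ [u Hu]]]]].
pose sT : seq XT := s.
have us : uniq sT by apply: NoDup_uniq.
have Hperm : forall g : G, perm_eq (map (fun x : XT => (act x g : XT)) sT) sT.
  move=> g; apply: uniq_perm => //.
    rewrite map_inj_uniq // => x y /(congr1 (fun z => act z g^-1)%g).
    by rewrite !hact.2 mulgV !hact.1.
  move=> x; apply/idP/idP.
    case/mapP=> y Hy ->; apply: Inmem; apply/Hen; apply: (HG y g); apply/Hen.
    exact (memIn Hy).
  move=> Hx; have Hy : (act x g^-1%g : XT) \in sT.
    apply: Inmem; apply/Hen; apply: (HG x); apply/Hen; exact (memIn Hx).
  apply/mapP; exists (act x g^-1%g) => //.
  by rewrite hact.2 mulVg hact.1.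
have Hsum : forall (V : zmodType) (F : X -> V) (g : G),
    \sum_(x <- s) F (act x g) = \sum_(x <- s) F x.
  move=> V F g; rewrite -(big_map (fun x : XT => (act x g : XT)) xpredT F).
  exact: (perm_big _ (Hperm g)).
pose P := fun (M N : rmod A) (phi : X -> M -> N) (m : M) =>
  ract (\sum_(x <- s) phi x m) (iota u).
have Key : forall (M N : rmod A) (phi : X -> M -> N), grhom act deg phi ->
    forall m a, \sum_(x <- s) phi x (ract m a) = ract (\sum_(x <- s) phi x m) a.
  move=> M N phi [Hadd Hmod] m a.
  have [t [f [Hf ->]]] := grading_span hgr a.
  rewrite !ract_sumr.
  under eq_bigr => x _ do rewrite (add_hom_sum _ _ (Hadd x)).
  rewrite exchange_big /=; apply: eq_bigr => g _.
  rewrite -(Hsum _ (fun x => phi x (ract m (f g))) g) ract_suml.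
  by apply: eq_bigr => x _; rewrite Hmod.
exists P; split; [|split].
- move=> M N phi Hphi; split.
    move=> m m'; rewrite /P -ractDl -big_split /=; congr ract.
    by apply: eq_bigr => x _; rewrite Hphi.1.
  move=> m a; rewrite /P Key // !ractA hcen //.
- move=> M N f Hf m; rewrite /P /Gmap sum_const_len -ract_nat ractA.
  by rewrite -(rmorph_nat iota) -rmorphM mulrC Hu rmorph1 ract1.
- move=> M M' N N' f h phi Hf Hh Hphi m; rewrite /P /=.
  rewrite -(add_hom_sum _ _ Hh.1) Hh.2 //.
Qed.
End Part1.


Lemma sum_pred1_uniq (T : eqType) (V : zmodType) (L : seq T) (x : T) (F : T -> V) :
  uniq L -> x \in L -> \sum_(h <- L | x == h) F h = F x.
Proof.
move=> uL xL; rewrite (perm_big _ (perm_to_rem xL)) big_cons eqxx big1_seq.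
  exact: addr0.
move=> i /andP [/eqP <-]; by rewrite mem_rem_uniqF.
Qed.

Lemma sum_supp (T : eqType) (V : zmodType) (L1 L2 : seq T) (F : T -> V) :
  uniq L1 -> uniq L2 -> (forall x, F x != 0 -> x \in L1) ->
  (forall x, F x != 0 -> x \in L2) ->
  \sum_(x <- L1) F x = \sum_(x <- L2) F x.
Proof.
move=> u1 u2 c1 c2.
have E : forall L : seq T, \sum_(x <- L) F x = \sum_(x <- filter (fun x => F x != 0) L) F x.
  move=> L; rewrite big_filter [in LHS](bigID (fun x => F x != 0)) /=.
  rewrite [X in _ + X]big1 ?addr0 //.
  by move=> i /negbNE/eqP.
rewrite (E L1) (E L2); apply: perm_big; apply: uniq_perm; rewrite ?filter_uniq //.
move=> x; rewrite !mem_filter; case: (boolP (F x != 0)) => //= H.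
by rewrite (c1 _ H) (c2 _ H).
Qed.

Section VDef.
Variables (X : Type) (A : pzRingType).
Definition fs (f : X -> A) := exists s : seq (XT X), forall x, f x != 0 -> (x : XT X) \in s.
Definition V := {f : X -> A | fs f}.
HB.instance Definition _ := boolp.gen_eqMixin V.
HB.instance Definition _ := boolp.gen_choiceMixin V.

Lemma eqV (f g : V) : (forall x, sval f x = sval g x) -> f = g.
Proof.
case: f => f Hf; case: g => g Hg /= H.
have E : f = g by apply: boolp.funext.
subst g; congr exist; exact: boolp.Prop_irrelevance.
Qed.

Lemma fs0 : fs (fun _ => 0).
Proof. by exists [::] => x; rewrite eqxx. Qed.
Definition V0 : V := exist _ (fun _ => 0) fs0.
Lemma fs_add (f g : X -> A) : fs f -> fs g -> fs (fun x => f x + g x).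
Proof.
case=> s Hs [t Ht]; exists (s ++ t) => x H; rewrite mem_cat.
case: (boolP (f x != 0)) => [/Hs -> //|/negbNE/eqP Hf].
by rewrite Hf add0r in H; rewrite (Ht _ H) orbT.
Qed.
Lemma fs_opp (f : X -> A) : fs f -> fs (fun x => - f x).
Proof. by case=> s Hs; exists s => x; rewrite oppr_eq0; apply: Hs. Qed.
Definition Vadd (f g : V) : V := exist _ _ (fs_add (svalP f) (svalP g)).
Definition Vopp (f : V) : V := exist _ _ (fs_opp (svalP f)).
Lemma VaddA : associative Vadd.
Proof. by move=> f g h; apply: eqV => x /=; rewrite addrA. Qed.
Lemma VaddC : commutative Vadd.
Proof. by move=> f g; apply: eqV => x /=; rewrite addrC. Qed.
Lemma Vadd0 : left_id V0 Vadd.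
Proof. by move=> f; apply: eqV => x /=; rewrite add0r. Qed.
Lemma VaddN : left_inverse V0 Vopp Vadd.
Proof. by move=> f; apply: eqV => x /=; rewrite addNr. Qed.
HB.instance Definition _ := GRing.isZmodule.Build V VaddA VaddC Vadd0 VaddN.

Lemma VaddE (f g : V) x : sval (f + g) x = sval f x + sval g x.
Proof. by []. Qed.
Lemma V0E x : sval (0 : V) x = 0.
Proof. by []. Qed.
End VDef.


Section Part2.
Variables (k : comPzRingType) (G : groupType) (X : Type)
  (act : X -> G -> X) (A : pzRingType) (iota : {rmorphism k -> A})
  (deg : G -> A -> Prop).
Hypotheses (hact : is_right_action act) (hgr : is_grading iota deg).
Local Notation XT := (XT X).

Definition hrep (r : seq (A * G)) := forall p, p \in r -> deg p.2 p.1.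

Lemma deg_opp g a : deg g a -> deg g (- a).
Proof.
by move=> H; rewrite -mulN1r -(rmorphN1 iota); apply: (gradingZ hgr).
Qed.

Lemma deg_sum g (I : eqType) (r : seq I) (P : pred I) (F : I -> A) :
  (forall i, i \in r -> P i -> deg g (F i)) -> deg g (\sum_(i <- r | P i) F i).
Proof.
elim: r => [|i r IH] H; first by rewrite big_nil; apply: (grading0 hgr).
rewrite big_cons; have IH' : deg g (\sum_(j <- r | P j) F j).
  by apply: IH => j jr; apply: H; rewrite inE jr orbT.
case: (boolP (P i)) => Pi //; apply: (gradingD hgr) => //.
by apply: H; rewrite ?inE ?eqxx.
Qed.

Lemma rep_ex a : exists r, hrep r /\ a = \sum_(p <- r) p.1.
Proof.
have [t [f [Hf ->]]] := grading_span hgr a.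
exists [seq (f g, g) | g <- t]; split; last by rewrite big_map.
by move=> p /mapP [g _ ->].
Qed.

Definition rep a := sval (boolp.constructive_indefinite_description (rep_ex a)).
Lemma rep_hrep a : hrep (rep a).
Proof. exact: (svalP (boolp.constructive_indefinite_description (rep_ex a))).1. Qed.
Lemma rep_sum a : a = \sum_(p <- rep a) p.1.
Proof. exact: (svalP (boolp.constructive_indefinite_description (rep_ex a))).2. Qed.

Definition comp a g := \sum_(p <- rep a | p.2 == g) p.1.

Lemma comp_rep r g : hrep r ->
  comp (\sum_(p <- r) p.1) g = \sum_(p <- r | p.2 == g) p.1.
Proof.
move=> hr; set a := \sum_(p <- r) p.1; rewrite /comp.
set r0 := rep a.
pose L := undup (map snd (r0 ++ r)).
pose H h := \sum_(p <- r0 | p.2 == h) p.1 - \sum_(p <- r | p.2 == h) p.1.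
have Hdeg : forall h, deg h (H h).
  move=> h; apply: (gradingD hgr).
    by apply: deg_sum => p pr /eqP <-; apply: (rep_hrep pr).
  by apply: deg_opp; apply: deg_sum => p pr /= /eqP <-; apply: (hr _ pr).
have Hs : forall r1 : seq (A * G), {subset map snd r1 <= L} ->
    \sum_(h <- L) \sum_(p <- r1 | p.2 == h) p.1 = \sum_(p <- r1) p.1.
  move=> r1 sub.
  rewrite (exchange_big_dep xpredT) //=; apply: eq_big_seq => p pr.
  rewrite (sum_pred1_uniq (fun _ => p.1)) ?undup_uniq //; apply: sub; exact: map_f.
have HL : \sum_(h <- L) H h = 0.
  rewrite sumrB !Hs; first by rewrite -rep_sum subrr.
    by move=> h hr2; rewrite mem_undup map_cat mem_cat hr2 orbT.
  by move=> h hr2; rewrite mem_undup map_cat mem_cat hr2.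
case: (boolP (g \in L)) => gL.
  apply/eqP; rewrite -subr_eq0; apply/eqP.
  exact: (grading_direct hgr (undup_uniq _) Hdeg HL gL).
rewrite !big1_seq // => p /andP [/eqP pg pr]; move: gL; rewrite mem_undup map_cat mem_cat -pg.
  by rewrite (map_f snd pr) orbT.
by rewrite (map_f snd pr).
Qed.

Lemma rep_group (F : G -> A) r (L : seq G) : hrep r -> uniq L -> {subset map snd r <= L} ->
  \sum_(p <- r) F p.2 * p.1 = \sum_(h <- L) F h * comp (\sum_(p <- r) p.1) h.
Proof.
move=> hr uL sub.
under [RHS]eq_bigr => h _ do rewrite comp_rep // mulr_sumr.
rewrite (exchange_big_dep xpredT) //=; apply: eq_big_seq => p pr.
rewrite (sum_pred1_uniq (fun h => F h * p.1)) //; apply: sub; exact: map_f.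
Qed.

Lemma rep_eq (F : G -> A) r r' : hrep r -> hrep r' ->
  \sum_(p <- r) p.1 = \sum_(p <- r') p.1 ->
  \sum_(p <- r) F p.2 * p.1 = \sum_(p <- r') F p.2 * p.1.
Proof.
move=> hr hr' E.
pose L := undup (map snd (r ++ r')).
rewrite (@rep_group F r L) ?undup_uniq //; last first.
  by move=> h hr1; rewrite mem_undup map_cat mem_cat hr1.
rewrite (@rep_group F r' L) ?undup_uniq ?E //.
by move=> h hr1; rewrite mem_undup map_cat mem_cat hr1 orbT.
Qed.


Lemma act_inv x g : act (act x g) g^-1%g = x.
Proof. by rewrite hact.2 mulgV hact.1. Qed.
Lemma act_inv' x g : act (act x g^-1%g) g = x.
Proof. by rewrite hact.2 mulVg hact.1. Qed.

Lemma fs_act (f : V X A) (a : A) :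
  fs (fun y => \sum_(p <- rep a) sval f (act y (p.2)^-1%g) * p.1).
Proof.
case: (svalP f) => s Hs.
exists [seq (act x p.2 : XT) | x <- (s : seq XT), p <- rep a] => y.
apply: contraR => Hy; rewrite big1_seq // => p /andP [_ pr].
have -> : sval f (act y (p.2)^-1%g) = 0; last by rewrite mul0r.
apply/eqP; apply: contraNT Hy => /Hs H.
have := allpairs_f (fun (x : XT) (q : A * G) => (act x q.2 : XT)) H pr.
by rewrite /= act_inv'.
Qed.

Definition Vact (f : V X A) (a : A) : V X A := exist _ _ (fs_act f a).
Lemma VactE f a y : sval (Vact f a) y = \sum_(p <- rep a) sval f (act y (p.2)^-1%g) * p.1.
Proof. by []. Qed.

Lemma Vact_rep f r y : hrep r ->
  sval (Vact f (\sum_(p <- r) p.1)) y = \sum_(p <- r) sval f (act y (p.2)^-1%g) * p.1.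
Proof.
move=> hr; rewrite VactE (@rep_eq (fun h => sval f (act y h^-1%g)) _ r) //; first exact: rep_hrep.
by rewrite -rep_sum.
Qed.

Lemma VactDl a (f f' : V X A) : Vact (f + f') a = Vact f a + Vact f' a.
Proof.
apply: eqV => y; rewrite VaddE !VactE -big_split /=; apply: eq_bigr => p _.
by rewrite mulrDl.
Qed.

Lemma VactDr (f : V X A) a b : Vact f (a + b) = Vact f a + Vact f b.
Proof.
apply: eqV => y; rewrite VaddE.
have hr : hrep (rep a ++ rep b).
  by move=> p; rewrite mem_cat => /orP [] /rep_hrep.
have E : a + b = \sum_(p <- rep a ++ rep b) p.1 by rewrite big_cat -!rep_sum.
by rewrite E Vact_rep // big_cat !VactE.
Qed.

Lemma Vact1 (f : V X A) : Vact f 1 = f.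
Proof.
apply: eqV => y.
have hr : hrep [:: ((1 : A), (1%g : G))] by move=> p; rewrite inE => /eqP -> /=; apply: (grading1 hgr).
have E : (1 : A) = \sum_(p <- [:: ((1 : A), (1%g : G))]) p.1 by rewrite big_cons big_nil addr0.
by rewrite E Vact_rep // big_seq1 /= invg1 hact.1 mulr1.
Qed.

Lemma VactA (f : V X A) a b : Vact (Vact f a) b = Vact f (a * b).
Proof.
apply: eqV => y.
pose r := [seq (p.1 * q.1, (p.2 * q.2)%g) | p <- rep a, q <- rep b].
have hr : hrep r.
  move=> pq /allpairsP [[p q] [pr qr ->]] /=.
  by apply: (gradingM hgr); [apply: rep_hrep pr|apply: rep_hrep qr].
have E : a * b = \sum_(p <- r) p.1.
  rewrite big_allpairs_dep /= [in LHS](rep_sum a) mulr_suml; apply: eq_bigr => p _.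
  by rewrite [in LHS](rep_sum b) mulr_sumr.
rewrite E Vact_rep // big_allpairs_dep VactE /=.
under [LHS]eq_bigr => q _ do rewrite mulr_suml.
rewrite exchange_big /=; apply: eq_bigr => p _; apply: eq_bigr => q _.
by rewrite hact.2 invgM mulrA.
Qed.

Definition VM : rmod A := @RMod A (V X A) Vact VactDl VactDr Vact1 VactA.

Definition AR : rmod A := @RMod A A (fun m a => m * a)
  (fun a m m' => mulrDl m m' a) (fun m a b => mulrDr m a b) (fun m => mulr1 m)
  (fun m a b => esym (mulrA m a b)).

Definition supl (f : V X A) : seq XT :=
  undup (sval (boolp.constructive_indefinite_description (svalP f))).
Lemma supl_uniq f : uniq (supl f).
Proof. exact: undup_uniq. Qed.
Lemma supl_cov f x : sval f x != 0 -> (x : XT) \in supl f.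
Proof.
move=> H; rewrite mem_undup.
exact: (svalP (boolp.constructive_indefinite_description (svalP f)) x H).
Qed.

Definition Veps (f : V X A) : A := \sum_(x <- supl f) sval f x.

Lemma Veps_any f (L : seq XT) : uniq L -> (forall x, sval f x != 0 -> (x : XT) \in L) ->
  Veps f = \sum_(x <- L) sval f x.
Proof. move=> uL cL; apply: sum_supp => //; [exact: supl_uniq|exact: supl_cov]. Qed.

Lemma Veps_add (f g : V X A) : Veps (f + g) = Veps f + Veps g.
Proof.
pose L := undup (supl f ++ supl g).
have cf : forall x, sval f x != 0 -> (x : XT) \in L.
  by move=> x /supl_cov H; rewrite mem_undup mem_cat H.
have cg : forall x, sval g x != 0 -> (x : XT) \in L.
  by move=> x /supl_cov H; rewrite mem_undup mem_cat H orbT.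
rewrite (@Veps_any f L) ?undup_uniq // (@Veps_any g L) ?undup_uniq //.
rewrite (@Veps_any (f + g) L) ?undup_uniq //; last first.
  move=> x; rewrite VaddE; case: (boolP (sval f x != 0)) => [/cf //|/negbNE/eqP ->].
  by rewrite add0r => /cg.
by rewrite -big_split.
Qed.

Lemma Veps_act (f : V X A) a : Veps (Vact f a) = Veps f * a.
Proof.
pose L := undup (supl (Vact f a) ++ [seq (act x p.2 : XT) | x <- supl f, p <- rep a]).
rewrite (@Veps_any _ L) ?undup_uniq; last first.
  by move=> x /supl_cov H; rewrite mem_undup mem_cat H.
by [].
under eq_bigr => y _ do rewrite VactE.
rewrite exchange_big /= [in RHS](rep_sum a) mulr_sumr; apply: eq_big_seq => p pr.
rewrite -mulr_suml; congr (_ * _).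
rewrite -(big_map (fun y : XT => (act y (p.2)^-1%g : XT)) xpredT (sval f)).
symmetry; apply: Veps_any.
  rewrite map_inj_uniq ?undup_uniq // => y y' /(congr1 (fun z => act z p.2)).
  by rewrite !act_inv'.
move=> x /supl_cov H; apply/mapP; exists (act x p.2); last by rewrite act_inv.
rewrite mem_undup mem_cat; apply/orP; right.
exact: (allpairs_f (fun (x : XT) (q : A * G) => (act x q.2 : XT)) H pr).
Qed.

Lemma fs_delta (x : X) (n : A) : fs (fun y => if (y : XT) == x then n else 0).
Proof.
by exists [:: (x : XT)] => y; rewrite mem_seq1; case: (y == x :> XT); rewrite ?eqxx.
Qed.
Definition delta (x : X) (n : A) : V X A := exist _ _ (fs_delta x n).

Lemma Veps_delta x n : Veps (delta x n) = n.
Proof.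
rewrite (@Veps_any _ [:: (x : XT)]) // ?big_seq1 /= ?eqxx //.
by move=> y /=; rewrite mem_seq1; case: (y == x :> XT); rewrite ?eqxx.
Qed.

Lemma fs_lm (b : A) (f : V X A) : fs (fun y => b * sval f y).
Proof.
case: (svalP f) => s Hs; exists s => y H; apply: Hs.
by apply: contraNneq H => ->; rewrite mulr0.
Qed.
Definition Vlm (b : A) (f : V X A) : V X A := exist _ _ (fs_lm b f).

Lemma Hid (M : rmod A) : is_Ahom (M:=M) (N:=M) id.
Proof. by []. Qed.

Lemma HVlm b : is_Ahom (M:=VM) (N:=VM) (Vlm b).
Proof.
split.
  by move=> f f'; apply: eqV => y /=; rewrite mulrDr.
move=> f a; apply: eqV => y /=; rewrite mulr_sumr; apply: eq_bigr => p _.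
by rewrite mulrA.
Qed.

Lemma Hlm (b : A) : is_Ahom (M:=AR) (N:=AR) (fun m => b * m).
Proof. by split => [m m'|m a] /=; rewrite ?mulrDr ?mulrA. Qed.

Lemma HVeps : is_Ahom (M:=VM) (N:=AR) Veps.
Proof. split; [exact: Veps_add|exact: Veps_act]. Qed.

Lemma Hphi : grhom act deg (fun (x : X) (n : AR) => (delta x n : VM)).
Proof.
split.
  move=> x m m'; apply: eqV => y /=.
  by case: (y == x :> XT); rewrite ?addr0.
move=> x g a n Ha; change (delta (act x g) (n * a) = Vact (delta x n) a); apply: eqV => y.
have hr : hrep [:: (a, g)] by move=> p; rewrite inE => /eqP -> /=.
have E : a = \sum_(p <- [:: (a, g)]) p.1 by rewrite big_cons big_nil addr0.
rewrite [in RHS]E Vact_rep // big_cons big_nil addr0 /=.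
have -> : ((y : XT) == act x g) = ((act y g^-1%g : XT) == x).
  by apply/eqP/eqP => [->|<-]; rewrite ?act_inv ?act_inv'.
by case: eqP; rewrite ?mul0r.
Qed.

Lemma part2 : (1 : A) <> 0 -> strongly_graded deg -> separable_G act deg ->
     exists (X' : X -> Prop) (s : list X),
       is_Gsubset act X' /\ enumerates X' s /\ s <> nil.
Proof.
move=> H10 Hst [P [HPhom [HPinv HPnat]]].
pose phi := fun (x : X) (n : AR) => (delta x n : VM).
pose nu := P AR VM phi.
pose F := sval (nu 1).
have Heps : Veps (nu 1) = 1.
  have := HPnat AR AR VM AR id Veps phi (Hid _) HVeps Hphi 1.
  have -> : (fun x => Veps \o phi x \o id) = @Gmap X A AR AR id.
    by apply: boolp.funext => x; apply: boolp.funext => n /=; rewrite Veps_delta.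
  by rewrite HPinv //; apply: Hid.
have Hrel : forall g b, deg g b -> forall y, b * F y = F (act y g^-1%g) * b.
  move=> g b Hb y.
  have h1 := HPnat AR AR VM VM id (Vlm b) phi (Hid _) (HVlm b) Hphi 1.
  have h2 := HPnat AR AR VM VM (fun m => b * m) id phi (Hlm b) (Hid _) Hphi 1.
  have E : (fun x => Vlm b \o phi x \o id) = (fun x => id \o phi x \o (fun m : AR => b * m)).
    apply: boolp.funext => x; apply: boolp.funext => n; apply: eqV => z /=.
    by case: eqP; rewrite ?mulr0.
  rewrite E h2 /= mulr1 in h1.
  have h3 := (HPhom AR VM phi Hphi).2 1 b; rewrite /= mul1r in h3.
  have := congr1 (fun f : V X A => sval f y) h1; rewrite /= h3 => <-.
  have hr : hrep [:: (b, g)] by move=> p; rewrite inE => /eqP -> /=.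
  have Eb : b = \sum_(p <- [:: (b, g)]) p.1 by rewrite big_cons big_nil addr0.
  by rewrite [X in Vact _ X]Eb Vact_rep // big_cons big_nil addr0.
have Hinv : forall y g, F y != 0 -> F (act y g) != 0.
  move=> y g Hy; apply: contraNneq Hy => H0.
  have [s [Hs E1]] : exists s : seq (A * A),
      (forall p, p \in s -> deg g p.1 /\ deg g^-1%g p.2) /\ 1 = \sum_(p <- s) p.1 * p.2.
    by apply: Hst; rewrite mulgV; apply: (grading1 hgr).
  rewrite -[F y]mul1r E1 mulr_suml big1_seq // => p /andP [_ ps].
  by rewrite -mulrA (Hrel _ _ (Hs p ps).2) invgK H0 mul0r mulr0.
pose s := filter (fun x : XT => F x != 0) (supl (nu 1)).
exists (fun x => F x != 0), s; split; [|split; [split|]].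
- by move=> x g; apply: Hinv.
- have Hu : uniq s by rewrite filter_uniq // supl_uniq.
  exact (uniq_NoDup Hu).
- move=> x; split.
    move=> Hx; have Hm : (x : XT) \in s by rewrite mem_filter Hx supl_cov.
    exact (memIn Hm).
  by move=> Hx; move: (@Inmem XT x s Hx); rewrite mem_filter => /andP [].
- move=> Hs0; apply: H10; rewrite -Heps (@Veps_any _ s).
  + by rewrite Hs0 big_nil.
  + by rewrite filter_uniq // supl_uniq.
  + by move=> x Hx; rewrite mem_filter Hx supl_cov.
Qed.

End Part2.

Unset Implicit Arguments.

Theorem corollary3p8p3 (k : comPzRingType) (G : groupType) (X : Type)
  (act : X -> G -> X) (A : pzRingType) (iota : {rmorphism k -> A})
  (deg : G -> A -> Prop) :
  is_right_action act -> central_image iota -> is_grading iota deg ->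
  ((exists (X' : X -> Prop) (s : list X),
       is_Gsubset act X' /\ enumerates X' s /\ s <> nil /\
       invertible ((length s)%:R : k)) ->
     separable_G act deg) /\
  ((1 : A) <> 0 -> strongly_graded deg -> separable_G act deg ->
     exists (X' : X -> Prop) (s : list X),
       is_Gsubset act X' /\ enumerates X' s /\ s <> nil).
Proof.
move=> hact hcen hgr; split.
  exact: (part1 hact hcen hgr).
exact: (part2 hact hgr).
Qed.
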